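(* Let $(N,+,* )$ be a nilpotent ring with adjoint operation $x\circ y=x+y+x*y$, let $S$ be a subring and $I$ a two-sided ideal of $N$ with $S\cap I=\{0\}$ and $N=S+I$. Then every $x\in N$ can be written uniquely as $x=s\circ i$ with $s\in S$, $i\in I$; define $x\bullet y=s\circ y\circ i$, so that $(N,+,\bullet)$ is a left brace, and let $r$ be its Yang–Baxter map. Let $X\subseteq N$ be such that $(X,r)$ is a solution of the set-theoretic Yang–Baxter equation, and let $J\subseteq I\cap X$ be a two-sided ideal of the ring $N$. Let $k:X\to X$ satisfy, for every $x\in X$: $k(x+j)=k(x)$ whenever $j\in J$ and $x+j\in X$; $k(x)-x\in J$; and $b\bullet k(x)=k(x)+b$ for all $b\in N$. Then $k$ is a reflection of $(X,r)$.
   Context: A (left) brace is a triple $(B,+,\circ)$ with $(B,+)$ abelian group, $(B,\circ)$ group, and $x\circ(y+z)=x\circ y+x\circ z-x$. The Yang–Baxter map of the brace $(N,+,\bullet)$ is $r(x,y)=(\sigma_x(y),\tau_y(x))$ with $\sigma_x(y)=x\bullet y-x$ and $\tau_y(x)=(\sigma_x(y))^{-1}\bullet x-(\sigma_x(y))^{-1}$, inverses taken in $(N,\bullet)$. For $X\subseteq N$, $(X,r)$ is a solution of the set-theoretic Yang–Baxter equation if $r(X\times X)\subseteq X\times X$ and $(\mathrm{id}\times r)(r\times\mathrm{id})(\mathrm{id}\times r)=(r\times\mathrm{id})(\mathrm{id}\times r)(r\times\mathrm{id})$ on $X^3$. A map $k:X\to X$ is a reflection of $(X,r)$ if $r(\mathrm{id}\times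 k)r(\mathrm{id}\times k)=(\mathrm{id}\times k)r(\mathrm{id}\times k)r$ on $X\times X$. *)

(* Defs.v *)
(* A nilpotent ring is a (non-unital) ring structure on an
   abelian group N : zmodType given by an explicit multiplication [mul]. *)
From HB Require Import structures.
From mathcomp Require Import all_boot all_order all_algebra.
From Stdlib Require Import ClassicalEpsilon.
Set Implicit Arguments. Unset Strict Implicit. Unset Printing Implicit Defensive.
Import GRing.Theory.
Local Open Scope ring_scope.

Section Defs.
Variable N : zmodType.
Implicit Types (mul : N -> N -> N) (P S I J X : N -> Prop).

Fixpoint nprod mul (x : N) (s : seq N) : N :=
  match s with [::] => x | y :: s' => mul x (nprod mul y s') end.

Definition nilpotent_ring mul : Prop :=
  [/\ (forall x y z, mul x (mul y z) = mul (mul x y) z),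
      (forall x y z, mul x (y + z) = mul x y + mul x z),
      (forall x y z, mul (x + y) z = mul x z + mul y z) &
      exists n : nat, forall x s, size s = n -> nprod mul x s = 0].

Definition additive_subgroup P : Prop :=
  [/\ P 0, (forall x y, P x -> P y -> P (x + y)) & (forall x, P x -> P (- x))].

Definition subring mul S : Prop :=
  additive_subgroup S /\ (forall x y, S x -> S y -> S (mul x y)).

Definition two_sided_ideal mul I : Prop :=
  [/\ additive_subgroup I, (forall x y, I y -> I (mul x y))
                         & (forall x y, I x -> I (mul x y))].

Definition adj mul (x y : N) : N := x + y + mul x y.

Definition sdecomp mul S I (x : N) : N * N :=
  epsilon (inhabits (0, 0))
    (fun p => [/\ S p.1, I p.2 & x = adj mul p.1 p.2]).

Definition bullet mul S I (x y : N) : N :=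
  let p := sdecomp mul S I x in adj mul (adj mul p.1 y) p.2.

Definition left_brace (op : N -> N -> N) : Prop :=
  [/\ (forall x y z, op x (op y z) = op (op x y) z),
      (exists e, (forall x, op e x = x /\ op x e = x) /\
                 (forall x, exists y, op x y = e /\ op y x = e)) &
      (forall x y z, op x (y + z) = op x y + op x z - x)].

(* inverse in the group (N, op) (whose neutral element is 0 for a brace) *)
Definition ginv (op : N -> N -> N) (x : N) : N :=
  epsilon (inhabits 0) (fun y => op x y = 0 /\ op y x = 0).

Definition ybe_sigma (op : N -> N -> N) (x y : N) : N := op x y - x.
Definition ybe_tau (op : N -> N -> N) (y x : N) : N :=
  let u := ginv op (ybe_sigma op x y) in op u x - u.

Definition ybe_map (op : N -> N -> N) (p : N * N) : N * N :=
  (ybe_sigma op p.1 p.2, ybe_tau op p.2 p.1).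

Definition r12 (r : N * N -> N * N) (t : N * N * N) : N * N * N :=
  let p := r (t.1.1, t.1.2) in (p.1, p.2, t.2).
Definition r23 (r : N * N -> N * N) (t : N * N * N) : N * N * N :=
  let p := r (t.1.2, t.2) in (t.1.1, p.1, p.2).

Definition ybe_solution (r : N * N -> N * N) X : Prop :=
  (forall x y, X x -> X y -> X (r (x, y)).1 /\ X (r (x, y)).2) /\
  (forall x y z, X x -> X y -> X z ->
     r23 r (r12 r (r23 r (x, y, z))) = r12 r (r23 r (r12 r (x, y, z)))).

Definition idk (k : N -> N) (p : N * N) : N * N := (p.1, k p.2).

(* k is a reflection of (X, r):  r(id x k) r(id x k) = (id x k) r (id x k) r
   on X x X (compositions read right-to-left) *)
Definition reflection (r : N * N -> N * N) X (k : N -> N) : Prop :=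
  forall x y, X x -> X y ->
    r (idk k (r (idk k (x, y)))) = idk k (r (idk k (r (x, y)))).

End Defs.

(* Main.v *)
Require Import Defs.
From mathcomp Require Import all_boot all_order all_algebra.
From Stdlib Require Import ClassicalEpsilon.
Import GRing.Theory.
Local Open Scope ring_scope.
Set Implicit Arguments. Unset Strict Implicit.

Lemma sub4 (N : zmodType) (x y z w : N) : (x - y) - (z - w) = (x - z) - (y - w).
Proof. by rewrite !opprB addrACA [RHS]addrACA [- z + _]addrC. Qed.

Section RingFacts.
Variable N : zmodType.
Variable mul : N -> N -> N.
Hypothesis mA : forall x y z, mul x (mul y z) = mul (mul x y) z.
Hypothesis mDr : forall x y z, mul x (y + z) = mul x y + mul x z.
Hypothesis mDl : forall x y z, mul (x + y) z = mul x z + mul y z.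

Lemma m0r x : mul 0 x = 0.
Proof. have h := mDl 0 0 x; rewrite addr0 in h.
by apply: (addrI (mul 0 x)); rewrite -h addr0. Qed.
Lemma mr0 x : mul x 0 = 0.
Proof. have h := mDr x 0 0; rewrite addr0 in h.
by apply: (addrI (mul x 0)); rewrite -h addr0. Qed.
Lemma mNr x y : mul (- x) y = - mul x y.
Proof. by apply: (addrI (mul x y)); rewrite -mDl !subrr m0r. Qed.
Lemma mrN x y : mul x (- y) = - mul x y.
Proof. by apply: (addrI (mul x y)); rewrite -mDr !subrr mr0. Qed.
Lemma mBl x y z : mul (x - y) z = mul x z - mul y z.
Proof. by rewrite mDl mNr. Qed.
Lemma mBr x y z : mul x (y - z) = mul x y - mul x z.
Proof. by rewrite mDr mrN. Qed.

Local Notation o := (adj mul).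

Lemma o0x x : o 0 x = x.
Proof. by rewrite /adj m0r add0r addr0. Qed.
Lemma ox0 x : o x 0 = x.
Proof. by rewrite /adj mr0 !addr0. Qed.
Lemma oA x y z : o x (o y z) = o (o x y) z.
Proof.
rewrite /adj !mDr !mDl !mA !addrA.
by rewrite [LHS](ACl (1*2*5*3*6*4*7)).
Qed.
Lemma oDr a y z : o a (y + z) = o a y + o a z - a.
Proof.
rewrite /adj mDr !addrA.
by rewrite [RHS](@GRing.add N).[ACl ((1*2*5*3*6)*(4*7))] subrr addr0.
Qed.
Lemma oDBl w1 w2 w3 b : o (w1 + w2 - w3) b = o w1 b + o w2 b - o w3 b.
Proof.
rewrite /adj !mDl mNr !opprD !addrA.
by rewrite [RHS](@GRing.add N).[ACl ((1*4*7*2*3*6*9)*(5*8))] subrr addr0.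
Qed.
End RingFacts.
Section Inv.
Variable N : zmodType.
Variable mul : N -> N -> N.
Hypothesis mA : forall x y z, mul x (mul y z) = mul (mul x y) z.
Hypothesis mDr : forall x y z, mul x (y + z) = mul x y + mul x z.
Hypothesis mDl : forall x y z, mul (x + y) z = mul x z + mul y z.
Variable n : nat.
Hypothesis nil : forall x s, size s = n -> nprod mul x s = 0.
Local Notation o := (adj mul).

Fixpoint ui (x : N) (m : nat) : N :=
  if m is m'.+1 then - x - mul x (ui x m') else 0.

Lemma o_ui x m : o x (ui x m) = - nprod mul (-x) (nseq m (-x)).
Proof.
elim: m => [|m IH] /=; first by rewrite ox0 ?opprK.
rewrite -[nprod _ _ _]opprK -IH (mNr mDl) (mrN mDr) opprK.
rewrite /adj !mDr !(mrN mDr) mA !opprD !addrA subrr add0r.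
by congr (_ + _); rewrite addrC.
Qed.

Definition inv x := ui x n.
Lemma o_inv x : o x (inv x) = 0.
Proof. by rewrite /inv o_ui nil ?oppr0 // size_nseq. Qed.
Lemma o_invl x : o (inv x) x = 0.
Proof.
have h : x = inv (inv x).
  by rewrite -[LHS](ox0 mDr) -(o_inv (inv x)) (oA mA mDr mDl) o_inv (o0x mDl).
by rewrite {2}h o_inv.
Qed.
Lemma oK x y : o (inv x) (o x y) = y.
Proof. by rewrite (oA mA mDr mDl) o_invl (o0x mDl). Qed.
Lemma oKV x y : o x (o (inv x) y) = y.
Proof. by rewrite (oA mA mDr mDl) o_inv (o0x mDl). Qed.

Lemma inv_closed (P : N -> Prop) x :
  (forall a b, P a -> P b -> P (a + b)) -> (forall a, P a -> P (- a)) ->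
  P 0 -> (forall b, P b -> P (mul x b)) -> P x -> P (inv x).
Proof.
move=> PD PN P0 PM Px; rewrite /inv; elim: n => [|m IH] //=.
by apply: PD; apply: PN => //; apply: PM.
Qed.

Lemma o_closed (P : N -> Prop) a b :
  (forall a b, P a -> P b -> P (a + b)) -> P (mul a b) -> P a -> P b -> P (o a b).
Proof. by move=> PD PM Pa Pb; exact: (PD _ _ (PD _ _ Pa Pb) PM). Qed.
End Inv.

Section Decomp.
Variable N : zmodType.
Variable mul : N -> N -> N.
Hypothesis mA : forall x y z, mul x (mul y z) = mul (mul x y) z.
Hypothesis mDr : forall x y z, mul x (y + z) = mul x y + mul x z.
Hypothesis mDl : forall x y z, mul (x + y) z = mul x z + mul y z.
Variable n : nat.
Hypothesis nil : forall x s, size s = n -> nprod mul x s = 0.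
Local Notation o := (adj mul).
Local Notation inv := (inv mul n).
Variables S I : N -> Prop.
Hypothesis S0 : S 0.
Hypothesis SD : forall x y, S x -> S y -> S (x + y).
Hypothesis SN : forall x, S x -> S (- x).
Hypothesis SM : forall x y, S x -> S y -> S (mul x y).
Hypothesis I0 : I 0.
Hypothesis ID : forall x y, I x -> I y -> I (x + y).
Hypothesis IN : forall x, I x -> I (- x).
Hypothesis IMl : forall x y, I y -> I (mul x y).
Hypothesis IMr : forall x y, I x -> I (mul x y).
Hypothesis SI : forall x, S x -> I x -> x = 0.
Hypothesis dec : forall x, exists s i, [/\ S s, I i & x = s + i].

Let oAx := oA mA mDr mDl.
Let oKx := oK mA mDr mDl nil.
Let oKVx := oKV mA mDr mDl nil.
Let oinv := o_inv mA mDr mDl nil.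
Let oinvl := o_invl mA mDr mDl nil.

Lemma Sinv s : S s -> S (inv s).
Proof. by move=> Ss; apply: inv_closed => // b Sb; apply: SM. Qed.
Lemma Iinv i : I i -> I (inv i).
Proof. by move=> Ii; apply: inv_closed => // b Sb; apply: IMr. Qed.
Lemma So a b : S a -> S b -> S (o a b).
Proof. by move=> Sa Sb; apply: o_closed => //; apply: SM. Qed.
Lemma Io a b : I a -> I b -> I (o a b).
Proof. by move=> Sa Sb; apply: o_closed => //; apply: IMr. Qed.

Lemma decomp_ex x : exists p : N * N, [/\ S p.1, I p.2 & x = o p.1 p.2].
Proof.
have [s [i [Ss Ii ->]]] := dec x.
exists (s, o (inv s) (s + i)); split => //=.
rewrite (oDr mDr) (o_invl mA mDr mDl nil) add0r /adj [X in I X](@GRing.add N).[ACl ((1*4)*2*3)] subrr add0r.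
by apply: ID => //; apply: IMl.
Qed.

Lemma decomp_uniq s1 i1 s2 i2 : S s1 -> I i1 -> S s2 -> I i2 ->
  o s1 i1 = o s2 i2 -> s1 = s2 /\ i1 = i2.
Proof.
move=> Ss1 Ii1 Ss2 Ii2 H.
have e (u v : N) : u = o u v - (v + mul u v) by rewrite /adj -[u + v + _]addrA addrK.
have Hs : I (s1 - s2).
  rewrite {1}(e s1 i1) {1}(e s2 i2) H [o s2 i2 - _]addrC addrKA.
  by apply: ID; apply: IN => //; try apply: IN; apply: ID => //; apply: IMl.
have E : s1 = s2 by apply/eqP; rewrite -subr_eq0; apply/eqP/SI => //; apply: SD => //; apply: SN.
split => //; by rewrite -(oKx s1 i1) H E oKx.
Qed.

Let sd := sdecomp mul S I.

Lemma sdecompP x : [/\ S (sd x).1, I (sd x).2 & x = o (sd x).1 (sd x).2].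
Proof. exact: (epsilon_spec (inhabits (0, 0)) _ (decomp_ex x)). Qed.

Lemma sdecompE s i : S s -> I i -> sd (o s i) = (s, i).
Proof.
move=> Ss Ii; have [H1 H2 H3] := sdecompP (o s i).
have [E1 E2] := decomp_uniq Ss Ii H1 H2 H3.
by rewrite [LHS]surjective_pairing -E1 -E2.
Qed.

Let B := bullet mul S I.

Lemma bulletE s i y : S s -> I i -> B (o s i) y = o (o s y) i.
Proof. by move=> Ss Ii; rewrite /B /bullet -/sd sdecompE. Qed.

Lemma bullet_ex x : exists s i, [/\ S s, I i & x = o s i].
Proof. by have [H1 H2 H3] := sdecompP x; exists (sd x).1, (sd x).2. Qed.

Lemma bA x y z : B x (B y z) = B (B x y) z.
Proof.
have [s [i [Ss Ii ->]]] := bullet_ex x.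
have [t [j [St Ij ->]]] := bullet_ex y.
have E : B (o s i) (o t j) = o (o s t) (o j i).
  by rewrite bulletE // !oAx.
rewrite E !bulletE //; first by rewrite !oAx.
all: by [apply: So | apply: Io].
Qed.

Lemma b0l x : B 0 x = x.
Proof. by rewrite -{1}(o0x mDl 0) bulletE // (ox0 mDr) (o0x mDl). Qed.
Lemma b0r x : B x 0 = x.
Proof.
have [s [i [Ss Ii ->]]] := bullet_ex x.
by rewrite bulletE // (ox0 mDr).
Qed.
Lemma binv x : exists y, B x y = 0 /\ B y x = 0.
Proof.
have [s [i [Ss Ii ->]]] := bullet_ex x.
exists (o (inv s) (inv i)); rewrite !bulletE //; try (by [apply: Sinv | apply: Iinv]).
split; rewrite !oAx ?oinv ?oinvl (o0x mDl) ?oinv ?oinvl //.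
Qed.
Lemma bD x y z : B x (y + z) = B x y + B x z - x.
Proof.
have [s [i [Ss Ii ->]]] := bullet_ex x.
by rewrite !bulletE // (oDr mDr) (oDBl mDl).
Qed.

Lemma brace : left_brace B.
Proof.
split; first exact: bA.
  by exists 0; split => [x|x]; [split; [exact: b0l|exact: b0r]|exact: binv].
exact: bD.
Qed.

Variable J : N -> Prop.
Hypothesis J0 : J 0.
Hypothesis JD : forall x y, J x -> J y -> J (x + y).
Hypothesis JN : forall x, J x -> J (- x).
Hypothesis JMl : forall x y, J y -> J (mul x y).
Hypothesis JMr : forall x y, J x -> J (mul x y).
Hypothesis JI : forall x, J x -> I x.

Lemma o_cg a a' b b' : J (a - a') -> J (b - b') -> J (o a b - o a' b').
Proof.
move=> Ha Hb.
have e : mul a b - mul a' b' = mul (a - a') b + mul a' (b - b').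
  by rewrite (mBl mDl) (mBr mDr) addrA subrK.
rewrite /adj opprD addrACA e opprD [X in X + _]addrACA.
apply: JD; first exact: JD.
by apply: JD; [apply: JMr | apply: JMl].
Qed.

Lemma B_cg a a' z z' : J (a - a') -> J (z - z') -> J (B a z - B a' z').
Proof.
have [s [i [Ss Ii ->]]] := bullet_ex a.
have [s' [i' [Ss' Ii' ->]]] := bullet_ex a'.
move=> Ha Hz.
have e (u v : N) : u = o u v - (v + mul u v) by rewrite /adj -[u + v + _]addrA addrK.
have Hs : I (s - s').
  rewrite {1}(e s i) {1}(e s' i') sub4.
  apply: ID; first exact: JI.
  by apply: IN; apply: ID; [|apply: IN]; apply: ID => //; apply: IMl.
have E : s = s'.
 apply/eqP; rewrite -subr_eq0; apply/eqP/SI; last exact: Hs.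
 by apply: SD => //; apply: SN.
subst s'.
have Hi : J (i - i').
  by rewrite -(oKx s i) -(oKx s i'); apply: o_cg; rewrite ?subrr.
by rewrite !bulletE //; apply: o_cg => //; apply: o_cg; rewrite ?subrr.
Qed.
End Decomp.

Section BraceRefl.
Variable N : zmodType.
Variable op : N -> N -> N.
Hypothesis bA : forall x y z, op x (op y z) = op (op x y) z.
Hypothesis b0l : forall x, op 0 x = x.
Hypothesis b0r : forall x, op x 0 = x.
Hypothesis binv : forall x, exists y, op x y = 0 /\ op y x = 0.
Hypothesis bD : forall x y z, op x (y + z) = op x y + op x z - x.
Variable J : N -> Prop.
Hypothesis J0 : J 0.
Hypothesis JD : forall x y, J x -> J y -> J (x + y).
Hypothesis JN : forall x, J x -> J (- x).
Hypothesis bcg : forall a a' z z', J (a - a') -> J (z - z') -> J (op a z - op a' z').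

Local Notation g := (ginv op).
Local Notation sg := (ybe_sigma op).
Local Notation tau := (ybe_tau op).

Lemma gP x : op x (g x) = 0 /\ op (g x) x = 0.
Proof. exact: (epsilon_spec (inhabits 0) _ (binv x)). Qed.

Lemma g_uniq x y : op y x = 0 -> g x = y.
Proof.
move=> h; have [h1 h2] := gP x.
by rewrite -[y]b0r -h1 bA h b0l.
Qed.

Lemma bB a u v : op a (u - v) = op a u - op a v + a.
Proof.
have h := bD a (u - v) v; rewrite subrK in h.
by rewrite h [RHS](@GRing.add N).[ACl ((1*(2*4))*(3*5))] subrr addr0 addNr addr0.
Qed.

Lemma tauE y x : tau y x = op (g (sg x y)) x - g (sg x y).
Proof. by []. Qed.

Lemma inv1 x y : sg (sg x y) (tau y x) = x.
Proof.
rewrite tauE; set p := sg x y; have [h1 h2] := gP p.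
by rewrite /ybe_sigma bB bA h1 b0l subr0 addrK.
Qed.

Lemma inv2 x y : tau (tau y x) (sg x y) = y.
Proof.
rewrite tauE inv1; have [h1 h2] := gP x.
by rewrite {1}/ybe_sigma bB bA h2 b0l subr0 addrK.
Qed.

Lemma cg_g a b : J (a - b) -> J (g a - g b).
Proof.
move=> H.
have e1 : g a = op (op (g a) b) (g b) by rewrite -bA (gP b).1 b0r.
have e2 : g b = op (op (g a) a) (g b) by rewrite (gP a).2 b0l.
have : J (op (op (g a) b) (g b) - op (op (g a) a) (g b)).
  by apply: bcg; [apply: bcg; [rewrite subrr | rewrite -opprB; apply: JN] | rewrite subrr].
by rewrite -e1 -e2.
Qed.

Lemma cg_sg x x' y y' : J (x - x') -> J (y - y') -> J (sg x y - sg x' y').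
Proof.
by move=> Hx Hy; rewrite /ybe_sigma sub4; apply: JD; [apply: bcg | apply: JN].
Qed.

Lemma cg_tau y y' x x' : J (y - y') -> J (x - x') -> J (tau y x - tau y' x').
Proof.
move=> Hy Hx; rewrite !tauE sub4.
have Hg := cg_g (cg_sg Hx Hy).
by apply: JD; [apply: bcg | apply: JN].
Qed.

Lemma refl_main (X : N -> Prop) (k : N -> N) :
  (forall x y, X x -> X y -> X (sg x y) /\ X (tau y x)) ->
  (forall x, X x -> X (k x)) ->
  (forall x j, X x -> J j -> X (x + j) -> k (x + j) = k x) ->
  (forall x, X x -> J (k x - x)) ->
  (forall x b, X x -> op b (k x) = k x + b) ->
  reflection (ybe_map op) X k.
Proof.
move=> Xr kX kJ kx kfix x y Xx Xy.
rewrite /reflection /idk /ybe_map /=.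
have sgk a z : X z -> sg a (k z) = k z by move=> Xz; rewrite /ybe_sigma kfix // addrK.
have gk z : X z -> g (k z) = - k z.
  by move=> Xz; apply: g_uniq; rewrite kfix // subrr.
have tauk z w : X z -> X w -> tau (k z) (k w) = k w.
  by move=> Xz Xw; rewrite tauE sgk // gk // kfix // addrK.
have kcg z w : X z -> X w -> J (w - z) -> k w = k z.
  by move=> Xz Xw H; rewrite -(subrKC z w) kJ // subrKC.
have Xt1 : X (tau (k y) x) := (Xr x (k y) Xx (kX y Xy)).2.
have [Xp Xq] := Xr x y Xx Xy.
rewrite (sgk x y Xy) (sgk (k y) _ Xt1) (sgk _ _ Xq) (tauk _ y Xt1 Xy).
congr pair.
  apply: kcg => //; apply: cg_tau; [exact: kx | by rewrite subrr].
have Xt2 : X (tau (k (tau y x)) (sg x y)) := (Xr _ _ Xp (kX _ Xq)).2.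
symmetry; apply: kcg => //.
rewrite -[X in _ - X](inv2 x y).
apply: cg_tau; [exact: kx | by rewrite subrr].
Qed.
End BraceRefl.

Unset Implicit Arguments. Set Strict Implicit.

Theorem mainTheorem10 (N : zmodType) (mul : N -> N -> N)
    (S I X J : N -> Prop) (k : N -> N) :
  nilpotent_ring mul ->
  subring mul S ->
  two_sided_ideal mul I ->
  (forall x, S x -> I x -> x = 0) ->
  (forall x, exists s i, [/\ S s, I i & x = s + i]) ->
  ybe_solution (ybe_map (bullet mul S I)) X ->
  two_sided_ideal mul J ->
  (forall j, J j -> I j /\ X j) ->
  (forall x, X x -> X (k x)) ->
  (forall x j, X x -> J j -> X (x + j) -> k (x + j) = k x) ->
  (forall x, X x -> J (k x - x)) ->
  (forall x b, X x -> bullet mul S I b (k x) = k x + b) ->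
  (forall x, exists! p : N * N, [/\ S p.1, I p.2 & x = adj mul p.1 p.2]) /\
  left_brace (bullet mul S I) /\
  reflection (ybe_map (bullet mul S I)) X k.
Proof.
move=> [mA mDr mDl [n nil]] [[S0 SD SN] SM] [[I0 ID IN] IMl IMr] SI dec
  [Xr _] [[J0 JD JN] JMl JMr] JIX kX kJ kx kfix.
have JI : forall x, J x -> I x by move=> x /JIX [].
split.
  move=> x; have [p Hp] := decomp_ex mA mDr mDl nil ID IMl dec x.
  exists p; split => // p' Hp'.
  case: Hp => [H1 H2 H3]; case: Hp' => [H1' H2' H3'].
  have [E1 E2] := decomp_uniq mA mDr mDl nil SD SN ID IN IMl SI H1 H2 H1' H2'
     (etrans (esym H3) H3').
  by rewrite [p]surjective_pairing [p']surjective_pairing E1 E2.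
split; first exact: (brace mA mDr mDl nil S0 SD SN SM I0 ID IN IMl IMr SI dec).
eapply refl_main; try eassumption.
all: try (by move=> *; eapply bA; eassumption).
all: try (by move=> *; eapply b0l; eassumption).
all: try (by move=> *; eapply b0r; eassumption).
all: try (by move=> *; eapply binv; eassumption).
all: try (by move=> *; eapply bD; eassumption).
all: try (by move=> *; eapply B_cg; eassumption).
all: try (by move=> x y Xx Xy; exact: (Xr x y Xx Xy)).
Qed.
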